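(* Let $G=(V,E)$ be a finite simple graph on $n$ vertices and $C\subseteq V$ such that no vertex of $V\setminus C$ is isolated in $G$. Let $t,k$ be positive integers with $t\le k$, and let $S=(v_1,\dots,v_t)$ and $S'=(v_1,\dots,v_t,v_{t+1},\dots,v_k)$ be legal sequences of $G;C$. Then $$k\le n-\Big|\bigcup_{i=1}^t N\langle v_i\rangle\Big| + t.$$
   Context: $N\langle v\rangle = N[v]$ (closed neighborhood) if $v\in C$ and $N\langle v\rangle=N(v)$ (open neighborhood) if $v\notin C$. A sequence $(v_1,\dots,v_k)$ of distinct vertices is a legal sequence of $G;C$ if $N\langle v_i\rangle\setminus\bigcup_{j=1}^{i-1}N\langle v_j\rangle\neq\emptyset$ for all $i=2,\dots,k$. *)

(* Defs.v *)
From mathcomp Require Import all_boot.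
Set Implicit Arguments. Unset Strict Implicit. Unset Printing Implicit Defensive.

Definition simple_graph (T : finType) (e : rel T) : Prop :=
  symmetric e /\ irreflexive e.

Definition onbhd (T : finType) (e : rel T) (v : T) : {set T} := [set u | e v u].
Definition cnbhd (T : finType) (e : rel T) (v : T) : {set T} := v |: onbhd e v.

Definition Nang (T : finType) (e : rel T) (C : {set T}) (v : T) : {set T} :=
  if v \in C then cnbhd e v else onbhd e v.

Definition Nang_seq (T : finType) (e : rel T) (C : {set T}) (s : seq T) : {set T} :=
  \bigcup_(v <- s) Nang e C v.

Definition legal_seq (T : finType) (e : rel T) (C : {set T}) (s : seq T) : Prop :=
  uniq s /\
  forall (i : nat) (x0 : T), 0 < i < size s ->
    Nang e C (nth x0 s i) :\: Nang_seq e C (take i s) != set0.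

(* Main.v *)
Require Import Defs.
From mathcomp Require Import all_boot.
From mathcomp Require Import zify.

Lemma grow (T : finType) (e : rel T) (C : {set T}) (s s' : seq T) :
  s = take (size s) s' -> legal_seq e C s' ->
  forall d, size s + d <= size s' -> 0 < size s ->
  #|Nang_seq e C s| + d <= #|Nang_seq e C (take (size s + d) s')|.
Proof.
move=> Hs [_ Hl]; elim=> [|d IH] Hd Hpos.
  by rewrite !addn0 -Hs.
have Hlt : size s + d < size s' by rewrite addnS in Hd.
have x0 : T by case: (s') Hlt => //= x _ _; exact: x.
rewrite !addnS (take_nth x0 Hlt) /Nang_seq big_rcons /=.
set A := \bigcup_(j <- take (size s + d) s') Nang e C j.
set B := Nang e C (nth x0 s' (size s + d)).
have H1 := IH (ltnW Hlt) Hpos.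
have H2 : #|A| < #|A :|: B|.
  rewrite setUC; apply: proper_card; apply: properUr.
  rewrite -setD_eq0; apply: Hl.
  by rewrite Hlt andbT; apply: leq_trans Hpos (leq_addr _ _).
exact: leq_ltn_trans H1 H2.
Qed.

Theorem proposition2 (T : finType) (e : rel T) (C : {set T}) (s s' : seq T) :
  simple_graph e ->
  (forall v : T, v \notin C -> exists u : T, e v u) ->
  0 < size s -> size s <= size s' ->
  s = take (size s) s' ->
  legal_seq e C s -> legal_seq e C s' ->
  size s' <= #|T| - #|Nang_seq e C s| + size s.
Proof.
move=> _ _ Hpos Hle Hs _ Hl'.
have := @grow _ _ _ _ _ Hs Hl' (size s' - size s).
rewrite subnKC // => /(_ (leqnn _) Hpos) H.
have Hc := max_card (mem (Nang_seq e C (take (size s') s'))).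
have := leq_trans H Hc.
lia.
Qed.
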